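(* Let $a,b,c,p\in\mathbb{C}$ with $-c\notin\mathbb{N}\cup\{0\}$. Suppose that \[ e^{-p\arctan z}F(a,b;c;z)=\sum_{n=0}^\infty u_nz^n,\qquad |z|<1. \] Then $u_0=1$, $u_1=\frac{ab}{c}-p$, $u_2=-\frac{abp}{c}+\frac{a(a+1)b(b+1)}{2c(c+1)}+\frac{p^2}{2}$, $u_3=\frac{abp^2}{2c}-\frac{a(a+1)b(b+1)p}{2c(c+1)}+\frac{a(a+1)(a+2)b(b+1)(b+2)}{6c(c+1)(c+2)}+\frac13\left(p-\frac{p^3}{2}\right)$, \[ u_4=\frac1{24}\left(\frac{6a(a+1)b(b+1)p^2}{c(c+1)}-\frac{4ab(p^2-2)p}{c}-\frac{4(a)_3(b)_3p}{(c)_3}+\frac{(a)_4(b)_4}{(c)_4}+p^4-8p^2\right), \] and for all integers $n\ge4$, \[ u_{n+1}=\beta_0(n)u_n+\beta_1(n)u_{n-1}+\beta_2(n)u_{n-2}+\beta_3(n)u_{n-3}+\beta_4(n)u_{n-4}, \] where \[ \begin{aligned} \beta_0(n)&=\frac{(a+n)(b+n)-p(c+2n)}{(n+1)(c+n)},\qquad \beta_1(n)=\frac{p(a+b+2n-1)-2(n-1)(c+n-2)-p^2}{(n+1)(c+n)},\\ \beta_2(n)&=\frac{2(a+n-2)(b+n-2)-p(c+2n-6)+p^2}{(n+1)(c+n)},\qquad \beta_3(n)=\frac{p(a+b+2n-7)-(n-3)(c+n-4)}{(n+1)(c+n)},\\ \beta_4(n)&=\frac{(a+n-4)(b+n-4)}{(n+1)(c+n)}.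 \end{aligned} \]
   Context: $\arctan$ denotes the principal branch, analytic on the unit disc with $\arctan0=0$. For $a\in\mathbb{C}$, $(a)_n=a(a+1)\cdots(a+n-1)$ denotes the Pochhammer symbol, with $(a)_0=1$. For $a,b,c\in\mathbb{C}$ with $-c\notin\mathbb{N}\cup\{0\}$, the Gaussian hypergeometric function is $F(a,b;c;z)=\sum_{n=0}^\infty \frac{(a)_n(b)_n}{(c)_n\,n!}z^n$, $|z|<1$. *)

(* Defs.v *)
From Stdlib Require Import Reals Arith Factorial.
From Coquelicot Require Import Coquelicot.

Open Scope C_scope.

Definition CSeries (a : nat -> C) : C :=
  @lim C_CompleteNormedModule (filtermap (sum_n a) eventually).

Fixpoint poch (a : C) (n : nat) : C :=
  match n with
  | O => 1
  | S m => poch a m * (a + RtoC (INR m))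
  end.

Definition Cexp (w : C) : C :=
  CSeries (fun n => pow_n w n / RtoC (INR (fact n))).

(* Principal branch of arctan on the unit disc (the analytic branch with
   arctan 0 = 0): arctan z = sum_k (-1)^k z^(2k+1) / (2k+1), |z| < 1. *)
Definition Carctan (z : C) : C :=
  CSeries (fun k => RtoC ((-1) ^ k) * pow_n z (2 * k + 1) / RtoC (INR (2 * k + 1))).

Definition hypF (a b c z : C) : C :=
  CSeries (fun n => poch a n * poch b n / (poch c n * RtoC (INR (fact n))) * pow_n z n).

(* Main.v *)
Require Import Defs.
From Stdlib Require Import Reals Lra Lia Arith FunctionalExtensionality.
From Coquelicot Require Import Coquelicot.
Open Scope C_scope.

Open Scope C_scope.

Lemma C_ball_iff (x y : C) (e : R) :
  @ball C_NormedModule x e y <-> (ball (fst x) e (fst y) /\ ball (snd x) e (snd y)).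
Proof. split; intros H; exact H. Qed.

Lemma sum_n_Re (a : nat -> C) n : Re (sum_n a n) = sum_n (fun k => Re (a k)) n.
Proof.
  induction n. now rewrite !sum_O.
  rewrite !sum_Sn. simpl. rewrite <- IHn. reflexivity.
Qed.
Lemma sum_n_Im (a : nat -> C) n : Im (sum_n a n) = sum_n (fun k => Im (a k)) n.
Proof.
  induction n. now rewrite !sum_O.
  rewrite !sum_Sn. simpl. rewrite <- IHn. reflexivity.
Qed.

Lemma is_series_C (a : nat -> C) (lr li : R) :
  is_series (fun n => Re (a n)) lr -> is_series (fun n => Im (a n)) li ->
  is_series a (lr, li).
Proof.
  unfold is_series. intros H1 H2.
  apply filterlim_locally. intros eps.
  pose proof (proj1 (filterlim_locally _ _) H1 eps) as B0; clear H1; rename B0 into H1.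
  pose proof (proj1 (filterlim_locally _ _) H2 eps) as B0; clear H2; rename B0 into H2.
  generalize (filter_and _ _ H1 H2).
  apply filter_imp. intros n [B1 B2].
  apply C_ball_iff. split. all: change (fst (sum_n a n)) with (Re (sum_n a n)); change (snd (sum_n a n)) with (Im (sum_n a n)).
  - rewrite sum_n_Re. exact B1.
  - rewrite sum_n_Im. exact B2.
Qed.

Lemma is_series_Re (a : nat -> C) (l : C) :
  is_series a l -> is_series (fun n => Re (a n)) (Re l).
Proof.
  unfold is_series. intros H.
  apply filterlim_locally. intros eps.
  pose proof (proj1 (filterlim_locally _ _) H eps) as B0; clear H; rename B0 into H.
  revert H. apply filter_imp. intros n B.
  apply C_ball_iff in B. destruct B as [B _]. rewrite sum_n_Re in B. exact B.
Qed.
Lemma is_series_Im (a : nat -> C) (l : C) :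
  is_series a l -> is_series (fun n => Im (a n)) (Im l).
Proof.
  unfold is_series. intros H.
  apply filterlim_locally. intros eps.
  pose proof (proj1 (filterlim_locally _ _) H eps) as B0; clear H; rename B0 into H.
  revert H. apply filter_imp. intros n B.
  apply C_ball_iff in B. destruct B as [_ B]. rewrite sum_n_Im in B. exact B.
Qed.

Lemma CSeries_correct (a : nat -> C) (l : C) : is_series a l -> CSeries a = l.
Proof.
  intros H. unfold CSeries.
  assert (HP : ProperFilter (filtermap (sum_n a) eventually)).
  { apply filtermap_proper_filter. apply eventually_filter. }
  assert (Hc : cauchy (filtermap (sum_n a) eventually)).
  { intros eps. exists l. exact (proj1 (filterlim_locally _ _) H eps). }
  pose proof (complete_cauchy (T := C_CompleteNormedModule) _ HP Hc) as H2.
  generalize dependent (@lim C_CompleteNormedModule (filtermap (sum_n a) eventually)).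
  intros L H2.
  assert (H3 : filterlim (sum_n a) eventually (@locally C_NormedModule L)).
  { apply filterlim_locally. intros eps. exact (H2 eps). }
  exact (@filterlim_locally_unique nat C_AbsRing C_NormedModule eventually _ (sum_n a) L l H3 H).
Qed.


Open Scope R_scope.
Lemma const_on (f : R -> R) (r : R) :
  (forall t, Rabs t < r -> derivable_pt_lim f t 0) ->
  forall t, Rabs t < r -> f t = f 0.
Proof.
  intros H t Ht.
  destruct (MVT_cor4 f (fun _ => 0) 0 (Rabs t)) with (b := t) as [c [Hc _]].
  - intros c Hc. apply is_derive_Reals. apply H.
    rewrite Rminus_0_r in Hc. lra.
  - rewrite Rminus_0_r. lra.
  - lra.
Qed.

Lemma ode_prod (yr yi zr zi kr ki : R -> R) (r : R) :
  (forall t, Rabs t < r -> derivable_pt_lim yr t (kr t * yr t - ki t * yi t)) ->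
  (forall t, Rabs t < r -> derivable_pt_lim yi t (kr t * yi t + ki t * yr t)) ->
  (forall t, Rabs t < r -> derivable_pt_lim zr t (-(kr t * zr t - ki t * zi t))) ->
  (forall t, Rabs t < r -> derivable_pt_lim zi t (-(kr t * zi t + ki t * zr t))) ->
  forall t, Rabs t < r ->
    yr t * zr t - yi t * zi t = yr 0 * zr 0 - yi 0 * zi 0 /\
    yr t * zi t + yi t * zr t = yr 0 * zi 0 + yi 0 * zr 0.
Proof.
  intros H1 H2 H3 H4 t Ht. split.
  - apply (const_on (fun s => yr s * zr s - yi s * zi s) r); [|exact Ht].
    intros s Hs.
    set (d := (kr s * yr s - ki s * yi s) * zr s + yr s * (-(kr s * zr s - ki s * zi s))
      - ((kr s * yi s + ki s * yr s) * zi s + yi s * (-(kr s * zi s + ki s * zr s)))).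
    replace 0 with d by (unfold d; ring).
    apply (derivable_pt_lim_minus (fun s => yr s * zr s) (fun s => yi s * zi s)).
    + apply (derivable_pt_lim_mult yr zr); auto.
    + apply (derivable_pt_lim_mult yi zi); auto.
  - apply (const_on (fun s => yr s * zi s + yi s * zr s) r); [|exact Ht].
    intros s Hs.
    set (d := (kr s * yr s - ki s * yi s) * zi s + yr s * (-(kr s * zi s + ki s * zr s))
      + ((kr s * yi s + ki s * yr s) * zr s + yi s * (-(kr s * zr s - ki s * zi s)))).
    replace 0 with d by (unfold d; ring).
    apply (derivable_pt_lim_plus (fun s => yr s * zi s) (fun s => yi s * zr s)).
    + apply (derivable_pt_lim_mult yr zi); auto.
    + apply (derivable_pt_lim_mult yi zr); auto.
Qed.

Lemma sum_abs_ge (v : nat -> R) N n : (n <= N)%nat ->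
  Rabs (v n) <= sum_f_R0 (fun k => Rabs (v k)) N.
Proof.
  assert (Hpos : forall N, 0 <= sum_f_R0 (fun k => Rabs (v k)) N).
  { induction N0; simpl. apply Rabs_pos. pose proof (Rabs_pos (v (S N0))). lra. }
  revert n. induction N; intros n Hn.
  - replace n with 0%nat by lia. simpl. lra.
  - simpl. destruct (Nat.eq_dec n (S N)) as [->|Hne].
    + pose proof (Hpos N). lra.
    + pose proof (IHN n ltac:(lia)). pose proof (Rabs_pos (v (S N))). lra.
Qed.

Lemma bounded_of_lim0 (v : nat -> R) : is_lim_seq v 0 -> exists M, forall n, Rabs (v n) <= M.
Proof.
  intros H. apply is_lim_seq_Reals in H.
  destruct (H 1 Rlt_0_1) as [N HN].
  exists (1 + sum_f_R0 (fun k => Rabs (v k)) N). intros n.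
  assert (Hpos : 0 <= sum_f_R0 (fun k => Rabs (v k)) N).
  { pose proof (sum_abs_ge v N 0 ltac:(lia)). pose proof (Rabs_pos (v 0%nat)). lra. }
  destruct (le_lt_dec N n) as [Hle|Hlt].
  - pose proof (HN n Hle) as Hd. unfold R_dist in Hd. rewrite Rminus_0_r in Hd. lra.
  - pose proof (sum_abs_ge v N n ltac:(lia)). lra.
Qed.

Lemma radius_conv (a : nat -> R) y : ex_series (fun n => a n * y ^ n) ->
  Rbar_le (Rabs y) (CV_radius a).
Proof.
  intros H. apply ex_series_lim_0 in H. apply bounded_of_lim0 in H.
  destruct H as [M HM].
  destruct (CV_radius_bounded a) as [Hub _]. apply Hub.
  exists M. intros n. rewrite RPow_abs, Rabs_mult, Rabs_Rabsolu, <- Rabs_mult.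
  apply HM.
Qed.

Lemma radius_lt (a : nat -> R) x y : Rabs x < Rabs y -> ex_series (fun n => a n * y ^ n) ->
  Rbar_lt (Rabs x) (CV_radius a).
Proof.
  intros Hxy H. apply radius_conv in H.
  apply Rbar_lt_le_trans with (Rabs y). simpl. exact Hxy. exact H.
Qed.

Lemma im_le_Cmod' (c : C) : Rabs (Im c) <= Cmod c.
Proof.
  rewrite <- (sqrt_pow2 (Rabs (Im c))) by apply Rabs_pos.
  unfold Cmod. apply sqrt_le_1_alt. rewrite pow2_abs.
  destruct c as [r i]. simpl. nra.
Qed.

Lemma radius_C (c : nat -> C) (b : nat -> R) x y :
  Rabs x < y -> (forall n, Cmod (c n) <= b n) -> ex_series (fun n => b n * y ^ n) ->
  Rbar_lt (Rabs x) (CV_radius (fun n => Re (c n))) /\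
  Rbar_lt (Rabs x) (CV_radius (fun n => Im (c n))).
Proof.
  intros Hxy Hb Hs.
  assert (Hy : 0 <= y) by (pose proof (Rabs_pos x); lra).
  split; apply radius_lt with y; try (rewrite (Rabs_right y); lra);
  (apply (@ex_series_le R_AbsRing R_CompleteNormedModule) with (2 := Hs)); intros n;
  change norm with Rabs; simpl; rewrite Rabs_mult, <- RPow_abs, (Rabs_right y) by lra;
  apply Rmult_le_compat_r; try (apply pow_le; lra);
  (eapply Rle_trans; [|apply Hb]).
  - apply re_le_Cmod.
  - apply im_le_Cmod'.
Qed.

Open Scope C_scope.

Lemma pow_n_C0 (z : C) : (pow_n z 0 : C) = 1.
Proof. reflexivity. Qed.
Lemma pow_n_CS (z : C) n : (pow_n z (S n) : C) = z * pow_n z n.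
Proof. reflexivity. Qed.

Lemma Cmod_pow_n z n : Cmod (pow_n z n) = (Cmod z ^ n)%R.
Proof.
  induction n. rewrite pow_n_C0. apply Cmod_1.
  rewrite pow_n_CS, Cmod_mult, IHn. reflexivity.
Qed.

Lemma pow_n_RtoC_mult (t : R) w n : (pow_n (RtoC t * w) n : C) = RtoC (t ^ n) * pow_n w n.
Proof.
  induction n. rewrite !pow_n_C0. simpl. ring.
  rewrite !pow_n_CS, IHn. simpl. rewrite RtoC_mult. ring.
Qed.

Definition ec (w : C) (n : nat) : C := pow_n w n / RtoC (INR (fact n)).

Lemma INR_fact_neq0 n : INR (fact n) <> 0%R.
Proof. apply not_0_INR. apply fact_neq_0. Qed.

Lemma RtoC_neq0 (r : R) : r <> 0%R -> RtoC r <> 0.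
Proof. intros H E. apply H. injection E. auto. Qed.

Lemma ec_bound w n : (Cmod (ec w n) <= / INR (fact n) * Cmod w ^ n)%R.
Proof.
  unfold ec. rewrite Cmod_div by (apply RtoC_neq0, INR_fact_neq0).
  rewrite Cmod_pow_n, Cmod_R, Rabs_right by (apply Rle_ge, pos_INR).
  right. unfold Rdiv. ring.
Qed.

Lemma ec_radius w x :
  Rbar_lt (Rabs x) (CV_radius (fun n => Re (ec w n))) /\
  Rbar_lt (Rabs x) (CV_radius (fun n => Im (ec w n))).
Proof.
  apply radius_C with (b := fun n => (/ INR (fact n) * Cmod w ^ n)%R) (y := (Rabs x + 1)%R).
  - lra.
  - apply ec_bound.
  - pose proof (is_exp_Reals (Cmod w * (Rabs x + 1))%R) as H.
    apply is_pseries_R in H.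
    eexists. eapply is_series_ext; [|exact H]. intros n. simpl.
    rewrite Rpow_mult_distr. ring.
Qed.

Lemma ec_scale (t : R) w n : pow_n (RtoC t * w) n / RtoC (INR (fact n)) = RtoC (t ^ n) * ec w n.
Proof. unfold ec. rewrite pow_n_RtoC_mult. unfold Cdiv. ring. Qed.

Lemma ex_series_of_radius a x : Rbar_lt (Rabs x) (CV_radius a) -> is_series (fun n => a n * x ^ n)%R (PSeries a x).
Proof.
  intros H. apply Series_correct. apply ex_pseries_R. apply CV_radius_inside. exact H.
Qed.

Lemma Cexp_scal_series (t : R) w :
  is_series (fun n => pow_n (RtoC t * w) n / RtoC (INR (fact n)))
    (PSeries (fun n => Re (ec w n)) t, PSeries (fun n => Im (ec w n)) t).
Proof.
  destruct (ec_radius w t) as [H1 H2].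
  apply is_series_C.
  - eapply is_series_ext; [|apply (ex_series_of_radius _ _ H1)].
    intros n. cbv beta. rewrite (ec_scale t w n), re_scal_l. apply Rmult_comm.
  - eapply is_series_ext; [|apply (ex_series_of_radius _ _ H2)].
    intros n. cbv beta. rewrite (ec_scale t w n), im_scal_l. apply Rmult_comm.
Qed.

Lemma ec_S w k : RtoC (INR (S k)) * ec w (S k) = w * ec w k.
Proof.
  unfold ec. rewrite pow_n_CS.
  rewrite fact_simpl, mult_INR, RtoC_mult.
  field. split; apply RtoC_neq0. apply INR_fact_neq0. apply not_0_INR. lia.
Qed.

Open Scope R_scope.

Lemma Re_Cmult (x y : C) : Re (x * y)%C = Re x * Re y - Im x * Im y.
Proof. destruct x, y. simpl. ring. Qed.
Lemma Im_Cmult (x y : C) : Im (x * y)%C = Re x * Im y + Im x * Re y.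
Proof. destruct x, y. simpl. ring. Qed.

Lemma series_combo (A B : nat -> R) (la lb p q : R) (D : nat -> R) :
  is_series A la -> is_series B lb ->
  (forall k, D k = p * A k + q * B k) -> is_series D (p * la + q * lb).
Proof.
  intros HA HB HD.
  pose proof (is_series_plus _ _ _ _ (is_series_scal p _ _ HA) (is_series_scal q _ _ HB)) as H.
  eapply is_series_ext; [|exact H]. intros k. rewrite HD. reflexivity.
Qed.

Lemma PSeries_combo (a A B : nat -> R) (x la lb p q : R) :
  is_series (fun k => A k * x ^ k) la -> is_series (fun k => B k * x ^ k) lb ->
  (forall k, a k = p * A k + q * B k) -> PSeries a x = p * la + q * lb.
Proof.
  intros HA HB Ha. unfold PSeries. apply is_series_unique.
  apply (series_combo _ _ _ _ _ _ _ HA HB). intros k. rewrite Ha. ring.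
Qed.

Lemma ec0 w : ec w 0 = 1%C.
Proof. unfold ec. rewrite pow_n_C0. simpl. apply injective_projections; simpl; field. Qed.

Lemma ec_deriv w t :
  derivable_pt_lim (PSeries (fun n => Re (ec w n))) t
     (Re w * PSeries (fun n => Re (ec w n)) t - Im w * PSeries (fun n => Im (ec w n)) t) /\
  derivable_pt_lim (PSeries (fun n => Im (ec w n))) t
     (Re w * PSeries (fun n => Im (ec w n)) t + Im w * PSeries (fun n => Re (ec w n)) t).
Proof.
  destruct (ec_radius w t) as [H1 H2].
  pose proof (ex_series_of_radius _ _ H1) as S1.
  pose proof (ex_series_of_radius _ _ H2) as S2.
  split; apply is_derive_Reals.
  - rewrite <- CV_radius_derive in H1.
    pose proof (is_derive_PSeries _ _ (ltac:(rewrite CV_radius_derive in H1; exact H1))) as D.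
    replace (Re w * _ - _) with (PSeries (PS_derive (fun n => Re (ec w n))) t); [exact D|].
    replace (Re w * PSeries (fun n => Re (ec w n)) t - Im w * PSeries (fun n => Im (ec w n)) t)
      with (Re w * PSeries (fun n => Re (ec w n)) t + (- Im w) * PSeries (fun n => Im (ec w n)) t) by ring.
    apply (PSeries_combo _ _ _ _ _ _ _ _ S1 S2).
    intros k. unfold PS_derive. pose proof (f_equal Re (ec_S w k)) as E.
    rewrite re_scal_l, Re_Cmult in E. rewrite E. ring.
  - pose proof (is_derive_PSeries (fun n => Im (ec w n)) t H2) as D.
    replace (Re w * _ + _) with (PSeries (PS_derive (fun n => Im (ec w n))) t); [exact D|].
    replace (Re w * PSeries (fun n => Im (ec w n)) t + Im w * PSeries (fun n => Re (ec w n)) t)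
      with (Im w * PSeries (fun n => Re (ec w n)) t + Re w * PSeries (fun n => Im (ec w n)) t) by ring.
    apply (PSeries_combo _ _ _ _ _ _ _ _ S1 S2).
    intros k. unfold PS_derive. pose proof (f_equal Im (ec_S w k)) as E.
    rewrite im_scal_l, Im_Cmult in E. rewrite E. ring.
Qed.

Open Scope R_scope.

Lemma Cexp_formula w : Cexp w = (exp (Re w) * cos (Im w), exp (Re w) * sin (Im w)).
Proof.
  set (yr := PSeries (fun n => Re (ec w n))).
  set (yi := PSeries (fun n => Im (ec w n))).
  assert (HC : Cexp w = (yr 1, yi 1)).
  { unfold Cexp. apply CSeries_correct.
    eapply is_series_ext; [|apply (Cexp_scal_series 1 w)].
    intros n. cbv beta. rewrite (ec_scale 1 w n), pow1, Cmult_1_l. reflexivity. }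
  rewrite HC.
  pose proof (ode_prod yr yi
     (fun t => exp (- Re w * t) * cos (Im w * t)) (fun t => - (exp (- Re w * t) * sin (Im w * t)))
     (fun _ => Re w) (fun _ => Im w) 2) as O.
  destruct O with (t := 1) as [E1 E2].
  - intros t _. apply (ec_deriv w t).
  - intros t _. apply (ec_deriv w t).
  - intros t _. apply is_derive_Reals. auto_derive. auto. ring.
  - intros t _. apply is_derive_Reals. auto_derive. auto. ring.
  - rewrite Rabs_R1. lra.
  - assert (Y0 : yr 0 = 1 /\ yi 0 = 0).
    { unfold yr, yi. rewrite !PSeries_0, ec0. simpl. auto. }
    destruct Y0 as [Y1 Y2]. rewrite Y1, Y2 in E1, E2.
    rewrite !Rmult_0_r, exp_0, cos_0, sin_0, Rmult_1_r, Rmult_1_l in E1, E2.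
    repeat rewrite Rmult_1_r in E1, E2. clear O. ring_simplify (1 * 1 - 0 * - (1 * 0)) in E1. ring_simplify (- (1 * 0) + 0 * (1 * 1)) in E2.
    set (e := exp (- Re w)) in *. set (c := cos (Im w)) in *. set (s := sin (Im w)) in *.
    set (Yr := yr 1) in *. set (Yi := yi 1) in *.
    assert (He : e * exp (Re w) = 1).
    { unfold e. rewrite <- exp_plus. replace (- Re w + Re w) with 0 by ring. apply exp_0. }
    assert (Hcs : c * c + s * s = 1).
    { unfold c, s. pose proof (sin2_cos2 (Im w)) as H. unfold Rsqr in H. lra. }
    assert (A : Yr * c + Yi * s = exp (Re w)).
    { transitivity (exp (Re w) * (e * (Yr * c + Yi * s))).
      - rewrite <- Rmult_assoc, (Rmult_comm (exp (Re w))), He. ring.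
      - replace (e * (Yr * c + Yi * s)) with 1 by lra. ring. }
    assert (B : - Yr * s + Yi * c = 0).
    { transitivity (exp (Re w) * (e * (- Yr * s + Yi * c))).
      - rewrite <- Rmult_assoc, (Rmult_comm (exp (Re w))), He. ring.
      - replace (e * (- Yr * s + Yi * c)) with 0 by lra. ring. }
    apply injective_projections; simpl.
    + transitivity (Yr * (c * c + s * s)). rewrite Hcs; ring.
      transitivity (c * (Yr * c + Yi * s) - s * (- Yr * s + Yi * c)). ring.
      rewrite A, B. ring.
    + transitivity (Yi * (c * c + s * s)). rewrite Hcs; ring.
      transitivity (s * (Yr * c + Yi * s) + c * (- Yr * s + Yi * c)). ring.
      rewrite A, B. ring.
Qed.

Open Scope R_scope.

Lemma is_series_zero : is_series (fun _ : nat => 0) 0.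
Proof.
  unfold is_series. eapply filterlim_ext; [|apply filterlim_const].
  intros n. simpl. induction n. rewrite sum_O. reflexivity.
  rewrite sum_Sn, <- IHn. simpl. change (plus 0 0) with (0 + 0). ring.
Qed.

Lemma pow_n_RtoC (x : R) n : (pow_n (RtoC x) n : C) = RtoC (x ^ n).
Proof.
  induction n. rewrite pow_n_C0. reflexivity.
  rewrite pow_n_CS, IHn. simpl. rewrite RtoC_mult. reflexivity.
Qed.

Lemma ps_atan_series x : -1 < x < 1 -> is_series (tg_alt (Ratan_seq x)) (ps_atan x).
Proof.
  intros Hx. unfold is_series.
  assert (H : is_lim_seq (sum_n (tg_alt (Ratan_seq x))) (ps_atan x)).
  { apply is_lim_seq_Reals. intros eps Heps.
    destruct (Ratan_is_ps_atan eps Heps) as [N HN]. exists N. intros n Hn.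
    rewrite sum_n_Reals. unfold R_dist. apply HN; (lia || lra). }
  exact H.
Qed.

Lemma atan_ps x : -1 < x < 1 -> atan x = ps_atan x.
Proof.
  intros Hx. destruct (Rtotal_order x 0) as [Hn|[H0|Hp]].
  - replace x with (- (- x)) by ring. rewrite atan_opp, ps_atan_opp.
    rewrite atan_eq_ps_atan. reflexivity. lra.
  - subst. rewrite atan_0, ps_atan0_0. reflexivity.
  - apply atan_eq_ps_atan. lra.
Qed.

Lemma Carctan_real x : -1 < x < 1 -> Carctan (RtoC x) = RtoC (atan x).
Proof.
  intros Hx. unfold Carctan. apply CSeries_correct.
  rewrite atan_ps by exact Hx.
  apply is_series_C.
  - eapply is_series_ext; [|apply (ps_atan_series x Hx)].
    intros k. unfold tg_alt, Ratan_seq. rewrite pow_n_RtoC.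
    rewrite <- RtoC_mult, <- RtoC_div by (apply not_0_INR; lia).
    rewrite re_RtoC. simpl. unfold Rdiv. symmetry. apply Rmult_assoc.
  - eapply is_series_ext; [|apply is_series_zero].
    intros k. rewrite pow_n_RtoC.
    rewrite <- RtoC_mult, <- RtoC_div by (apply not_0_INR; lia).
    rewrite im_RtoC. reflexivity.
Qed.

Open Scope C_scope.

Fixpoint gpair (p : C) (n : nat) : C * C :=
  match n with
  | O => (RtoC 1, - p)
  | S m => let (x, y) := gpair p m in (y, (- p * y - RtoC (INR m) * x) / RtoC (INR (m + 2)))
  end.
Definition gs (p : C) (n : nat) : C := fst (gpair p n).

Lemma gs_0 p : gs p 0 = 1. Proof. reflexivity. Qed.
Lemma gs_1 p : gs p 1 = - p. Proof. reflexivity. Qed.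
Lemma gs_SS p n : gs p (S (S n)) = (- p * gs p (S n) - RtoC (INR n) * gs p n) / RtoC (INR (n + 2)).
Proof.
  unfold gs. simpl. destruct (gpair p n) as [x y] eqn:E. simpl. reflexivity.
Qed.
Lemma gs_rec p n : RtoC (INR (n + 2)) * gs p (S (S n)) = - p * gs p (S n) - RtoC (INR n) * gs p n.
Proof.
  rewrite gs_SS. field. apply RtoC_neq0. apply not_0_INR. lia.
Qed.

Lemma gs_bound p n : (Cmod (gs p n) <= (Cmod p + 1) ^ n)%R.
Proof.
  set (M := (Cmod p + 1)%R).
  assert (HM : (1 <= M)%R) by (unfold M; pose proof (Cmod_ge_0 p); lra).
  assert (H : forall n, (Cmod (gs p n) <= M ^ n)%R /\ (Cmod (gs p (S n)) <= M ^ (S n))%R).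
  { induction n0.
    - rewrite gs_0, gs_1, Cmod_1, Cmod_opp. simpl. unfold M. lra.
    - destruct IHn0 as [H1 H2]. split; [exact H2|].
      rewrite gs_SS. rewrite Cmod_div by (apply RtoC_neq0, not_0_INR; lia).
      rewrite Cmod_R, Rabs_right by (apply Rle_ge, pos_INR).
      apply Rle_trans with ((Cmod p * M ^ S n0 + INR n0 * M ^ n0) / INR (n0 + 2))%R.
      + unfold Rdiv. apply Rmult_le_compat_r.
        { apply Rlt_le, Rinv_0_lt_compat. apply lt_0_INR. lia. }
        unfold Cminus. eapply Rle_trans; [apply Cmod_triangle|].
        rewrite Cmod_opp, !Cmod_mult, Cmod_opp, Cmod_R, Rabs_right by (apply Rle_ge, pos_INR).
        apply Rplus_le_compat.
        * apply Rmult_le_compat_l. apply Cmod_ge_0. exact H2.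
        * apply Rmult_le_compat_l. apply pos_INR. exact H1.
      + assert (Hn2 : (0 < INR (n0 + 2))%R) by (apply lt_0_INR; lia).
        apply Rle_div_l; [lra|].
        rewrite plus_INR. simpl (INR 2).
        assert (Hp : (Cmod p <= M)%R) by (unfold M; lra).
        assert (HMn : (1 <= M ^ n0)%R) by (apply pow_R1_Rle; exact HM).
        pose proof (pos_INR n0).
        assert (Cmod p * M ^ S n0 <= M ^ S (S n0))%R.
        { simpl. assert (0 <= M ^ n0)%R by (apply pow_le; lra). assert (0 <= Cmod p) by apply Cmod_ge_0. assert (Cmod p * M <= M * M)%R by nra. nra. }
        assert (INR n0 * M ^ n0 <= INR n0 * M ^ S (S n0))%R.
        { apply Rmult_le_compat_l; [lra|]. simpl. assert (A1 : (M ^ n0 <= M * M ^ n0)%R) by nra. assert (A2 : (M * M ^ n0 <= M * (M * M ^ n0))%R) by nra. lra. }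
        assert (0 <= M ^ S (S n0))%R by (apply pow_le; lra).
        nra. }
  apply H.
Qed.

Open Scope R_scope.

Lemma gs_radius p x : Rabs x < / (Cmod p + 1) ->
  Rbar_lt (Rabs x) (CV_radius (fun n => Re (gs p n))) /\
  Rbar_lt (Rabs x) (CV_radius (fun n => Im (gs p n))).
Proof.
  intros Hx. set (M := Cmod p + 1).
  assert (HM : 1 <= M) by (unfold M; pose proof (Cmod_ge_0 p); lra).
  assert (HMp : 0 < M) by lra.
  apply radius_C with (b := fun n => M ^ n) (y := (Rabs x + / M) / 2).
  - fold M in Hx. lra.
  - intros n. apply gs_bound.
  - assert (Hq : Rabs (M * ((Rabs x + / M) / 2)) < 1).
    { pose proof (Rabs_pos x). fold M in Hx.
      rewrite Rabs_right.
      + replace (M * ((Rabs x + / M) / 2)) with ((M * Rabs x + M * / M) / 2) by (unfold Rdiv; ring).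
        rewrite Rinv_r by lra.
        assert (M * Rabs x < 1).
        { apply Rmult_lt_reg_l with (/ M). apply Rinv_0_lt_compat; lra.
          rewrite <- Rmult_assoc, Rinv_l, Rmult_1_l, Rmult_1_r by lra. exact Hx. }
        lra.
      + apply Rle_ge. apply Rmult_le_pos. lra.
        pose proof (Rinv_0_lt_compat M HMp). lra. }
    destruct (ex_series_geom _ Hq) as [l Hl]. exists l.
    eapply is_series_ext; [|exact Hl]. intros n. simpl. rewrite Rpow_mult_distr. reflexivity.
Qed.

Lemma gs_ode p k :
  (RtoC (INR (S k)) * gs p (S k) +
  (match k with O | S O => 0 | S (S m) => RtoC (INR (S m)) * gs p (S m) end) = - p * gs p k)%C.
Proof.
  destruct k as [|[|m]].
  - rewrite gs_0, gs_1. simpl. apply injective_projections; simpl; ring.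
  - pose proof (gs_rec p 0) as H. rewrite gs_0 in H. simpl in H |- *.
    rewrite Cplus_0_r. rewrite H. apply injective_projections; simpl; ring.
  - pose proof (gs_rec p (S m)) as H.
    replace (INR (S (S (S m)))) with (INR (S m + 2)) by (f_equal; lia).
    rewrite H. ring.
Qed.

Open Scope R_scope.

Lemma G_deriv p x : Rabs x < / (Cmod p + 1) ->
  derivable_pt_lim (PSeries (fun n => Re (gs p n))) x
    ((- Re p / (1 + x ^ 2)) * PSeries (fun n => Re (gs p n)) x
      - (- Im p / (1 + x ^ 2)) * PSeries (fun n => Im (gs p n)) x) /\
  derivable_pt_lim (PSeries (fun n => Im (gs p n))) x
    ((- Re p / (1 + x ^ 2)) * PSeries (fun n => Im (gs p n)) x
      + (- Im p / (1 + x ^ 2)) * PSeries (fun n => Re (gs p n)) x).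
Proof.
  intros Hx. destruct (gs_radius p x Hx) as [H1 H2].
  pose proof (ex_series_of_radius _ _ H1) as S1.
  pose proof (ex_series_of_radius _ _ H2) as S2.
  assert (Hq : 0 < 1 + x ^ 2) by (pose proof (pow2_ge_0 x); lra).
  set (gr := fun n => Re (gs p n)) in *.
  set (gi := fun n => Im (gs p n)) in *.
  assert (Gen : forall (a : nat -> R) (P Q : R),
    Rbar_lt (Rabs x) (CV_radius a) ->
    (forall k, PS_derive a k + PS_incr_1 (PS_incr_1 (PS_derive a)) k = P * gr k + Q * gi k) ->
    derivable_pt_lim (PSeries a) x ((P * PSeries gr x + Q * PSeries gi x) / (1 + x ^ 2))).
  { intros a P Q Ha Hk. apply is_derive_Reals.
    replace ((P * PSeries gr x + Q * PSeries gi x) / (1 + x ^ 2)) with (PSeries (PS_derive a) x).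
    - apply is_derive_PSeries. exact Ha.
    - assert (Hd : Rbar_lt (Rabs x) (CV_radius (PS_derive a))) by (rewrite CV_radius_derive; exact Ha).
      assert (Hdd : Rbar_lt (Rabs x) (CV_radius (PS_incr_1 (PS_incr_1 (PS_derive a))))).
      { rewrite !CV_radius_incr_1. exact Hd. }
      assert (E : PSeries (PS_plus (PS_derive a) (PS_incr_1 (PS_incr_1 (PS_derive a)))) x
                  = P * PSeries gr x + Q * PSeries gi x).
      { rewrite (PSeries_ext _ (fun k => P * gr k + Q * gi k)).
        - apply (PSeries_combo _ _ _ _ _ _ _ _ S1 S2). intros k. reflexivity.
        - intros k. rewrite <- Hk. reflexivity. }
      rewrite PSeries_plus in E by (apply CV_radius_inside; assumption).
      rewrite !PSeries_incr_1 in E.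
      rewrite <- E. field. lra. }
  assert (RP : forall (r : R) (z1 z2 : C), Re (RtoC r * z1 + z2)%C = r * Re z1 + Re z2).
  { intros r z1 z2. destruct z1, z2. simpl. ring. }
  assert (IP : forall (r : R) (z1 z2 : C), Im (RtoC r * z1 + z2)%C = r * Im z1 + Im z2).
  { intros r z1 z2. destruct z1, z2. simpl. ring. }
  assert (RM : forall z : C, Re (- p * z)%C = - Re p * Re z + Im p * Im z).
  { intros z. destruct p, z. simpl. ring. }
  assert (IM : forall z : C, Im (- p * z)%C = - Im p * Re z + - Re p * Im z).
  { intros z. destruct p, z. simpl. ring. }
  assert (R1 : forall (r : R) (z : C), Re (RtoC r * z)%C = r * Re z).
  { intros r z. destruct z. simpl. ring. }
  assert (I1 : forall (r : R) (z : C), Im (RtoC r * z)%C = r * Im z).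
  { intros r z. destruct z. simpl. ring. }
  split.
  - replace ((- Re p / (1 + x ^ 2)) * PSeries gr x - (- Im p / (1 + x ^ 2)) * PSeries gi x)
      with ((- Re p * PSeries gr x + Im p * PSeries gi x) / (1 + x ^ 2)) by (field; lra).
    apply Gen. exact H1.
    intros k. pose proof (f_equal Re (gs_ode p k)) as E. rewrite RM in E.
    destruct k as [|[|m]].
    + change (INR 1 * gr 1%nat + 0 = - Re p * gr 0%nat + Im p * gi 0%nat).
      rewrite RP in E. simpl (Re 0) in E. unfold gr, gi. lra.
    + change (INR 2 * gr 2%nat + 0 = - Re p * gr 1%nat + Im p * gi 1%nat).
      rewrite RP in E. simpl (Re 0) in E. unfold gr, gi. lra.
    + change (INR (S (S (S m))) * gr (S (S (S m))) + INR (S m) * gr (S m)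
         = - Re p * gr (S (S m)) + Im p * gi (S (S m))).
      rewrite RP, R1 in E. unfold gr, gi. lra.
  - replace ((- Re p / (1 + x ^ 2)) * PSeries gi x + (- Im p / (1 + x ^ 2)) * PSeries gr x)
      with ((- Im p * PSeries gr x + - Re p * PSeries gi x) / (1 + x ^ 2)) by (field; lra).
    apply Gen. exact H2.
    intros k. pose proof (f_equal Im (gs_ode p k)) as E. rewrite IM in E.
    destruct k as [|[|m]].
    + change (INR 1 * gi 1%nat + 0 = - Im p * gr 0%nat + - Re p * gi 0%nat).
      rewrite IP in E. simpl (Im 0) in E. unfold gr, gi. lra.
    + change (INR 2 * gi 2%nat + 0 = - Im p * gr 1%nat + - Re p * gi 1%nat).
      rewrite IP in E. simpl (Im 0) in E. unfold gr, gi. lra.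
    + change (INR (S (S (S m))) * gi (S (S (S m))) + INR (S m) * gi (S m)
         = - Im p * gr (S (S m)) + - Re p * gi (S (S m))).
      rewrite IP, I1 in E. unfold gr, gi. lra.
Qed.

Open Scope R_scope.

Lemma G_eq p x : Rabs x < / (Cmod p + 1) ->
  (PSeries (fun n => Re (gs p n)) x, PSeries (fun n => Im (gs p n)) x)
  = Cexp (- p * Carctan (RtoC x))%C.
Proof.
  intros Hx.
  assert (HM : 1 <= Cmod p + 1) by (pose proof (Cmod_ge_0 p); lra).
  assert (Hx1 : -1 < x < 1).
  { assert (/ (Cmod p + 1) <= 1).
    { rewrite <- Rinv_1. apply Rinv_le_contravar; lra. }
    assert (Rabs x < 1) by lra. apply Rabs_def2 in H0. lra. }
  rewrite Carctan_real by exact Hx1. rewrite Cexp_formula.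
  set (t := atan x).
  set (gr := PSeries (fun n => Re (gs p n))).
  set (gi := PSeries (fun n => Im (gs p n))).
  pose proof (ode_prod gr gi
     (fun y => exp (Re p * atan y) * cos (Im p * atan y))
     (fun y => exp (Re p * atan y) * sin (Im p * atan y))
     (fun y => - Re p / (1 + y ^ 2)) (fun y => - Im p / (1 + y ^ 2))
     (/ (Cmod p + 1))) as O.
  destruct O with (t := x) as [E1 E2].
  - intros y Hy. apply (G_deriv p y Hy).
  - intros y Hy. apply (G_deriv p y Hy).
  - intros y _. apply is_derive_Reals. auto_derive. auto.
    assert (0 < 1 + y ^ 2) by (pose proof (pow2_ge_0 y); lra). field. lra.
  - intros y _. apply is_derive_Reals. auto_derive. auto.
    assert (0 < 1 + y ^ 2) by (pose proof (pow2_ge_0 y); lra). field. lra.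
  - exact Hx.
  - assert (Y0 : gr 0 = 1 /\ gi 0 = 0).
    { unfold gr, gi. rewrite !PSeries_0, gs_0. simpl. auto. }
    destruct Y0 as [Y1 Y2]. rewrite Y1, Y2 in E1, E2. clear O.
    rewrite atan_0, !Rmult_0_r, exp_0, cos_0, sin_0 in E1, E2.
    ring_simplify (1 * (1 * 1) - 0 * (1 * 0)) in E1.
    ring_simplify (1 * (1 * 0) + 0 * (1 * 1)) in E2.
    fold t in E1, E2.
    replace (Re (- p * RtoC t)%C) with (- (Re p * t)) by (destruct p; simpl; ring).
    replace (Im (- p * RtoC t)%C) with (- (Im p * t)) by (destruct p; simpl; ring).
    rewrite cos_neg, sin_neg.
    set (e := exp (Re p * t)) in *. set (c := cos (Im p * t)) in *. set (s := sin (Im p * t)) in *.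
    set (e' := exp (- (Re p * t))).
    set (Yr := gr x) in *. set (Yi := gi x) in *.
    assert (He : e * e' = 1).
    { unfold e, e'. rewrite <- exp_plus. replace (Re p * t + - (Re p * t)) with 0 by ring. apply exp_0. }
    assert (Hcs : c * c + s * s = 1).
    { unfold c, s. pose proof (sin2_cos2 (Im p * t)) as H. unfold Rsqr in H. lra. }
    assert (A : Yr * c - Yi * s = e').
    { transitivity (e' * (e * (Yr * c - Yi * s))).
      - rewrite <- Rmult_assoc, (Rmult_comm e'), He. ring.
      - replace (e * (Yr * c - Yi * s)) with 1 by lra. ring. }
    assert (B : Yr * s + Yi * c = 0).
    { transitivity (e' * (e * (Yr * s + Yi * c))).
      - rewrite <- Rmult_assoc, (Rmult_comm e'), He. ring.
      - replace (e * (Yr * s + Yi * c)) with 0 by lra. ring. }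
    apply injective_projections; simpl.
    + transitivity (Yr * (c * c + s * s)). rewrite Hcs; ring.
      transitivity (c * (Yr * c - Yi * s) + s * (Yr * s + Yi * c)). ring.
      rewrite A, B. ring.
    + transitivity (Yi * (c * c + s * s)). rewrite Hcs; ring.
      transitivity (- s * (Yr * c - Yi * s) + c * (Yr * s + Yi * c)). ring.
      rewrite A, B. ring.
Qed.

Open Scope R_scope.

Lemma delta_fin (c : C) : (forall m : nat, c <> (- RtoC (INR m))%C) ->
  forall K, exists d, 0 < d /\ forall n, (n < K)%nat -> d * INR (S n) <= Cmod (c + RtoC (INR n))%C.
Proof.
  intros hc K. induction K.
  - exists 1. split. lra. intros n Hn. lia.
  - destruct IHK as [d [Hd HK]].
    assert (Hnz : (c + RtoC (INR K))%C <> 0%C).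
    { intros E. apply (hc K). replace c with ((c + RtoC (INR K)) - RtoC (INR K))%C by ring. rewrite E. ring. }
    assert (HSK : 0 < INR (S K)) by (apply lt_0_INR; lia).
    pose proof (proj1 (Cmod_gt_0 _) Hnz) as Hpos.
    exists (Rmin d (Cmod (c + RtoC (INR K))%C / INR (S K))). split.
    + apply Rmin_pos. exact Hd. apply Rdiv_lt_0_compat; assumption.
    + intros n Hn. destruct (Nat.eq_dec n K) as [->|Hne].
      * apply Rle_trans with (Cmod (c + RtoC (INR K))%C / INR (S K) * INR (S K)).
        -- apply Rmult_le_compat_r. lra. apply Rmin_r.
        -- right. field. lra.
      * apply Rle_trans with (d * INR (S n)).
        -- apply Rmult_le_compat_r. apply pos_INR. apply Rmin_l.
        -- apply HK. lia.
Qed.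

Lemma delta_exists (c : C) : (forall m : nat, c <> (- RtoC (INR m))%C) ->
  exists d, 0 < d /\ forall n, d * INR (S n) <= Cmod (c + RtoC (INR n))%C.
Proof.
  intros hc. destruct (INR_unbounded (2 * Cmod c + 1)) as [N HN].
  destruct (delta_fin c hc N) as [d [Hd HK]].
  exists (Rmin d (1 / 4)). split.
  - apply Rmin_pos. exact Hd. lra.
  - intros n. destruct (Nat.lt_ge_cases n N) as [Hlt|Hge].
    + apply Rle_trans with (d * INR (S n)).
      * apply Rmult_le_compat_r. apply pos_INR. apply Rmin_l.
      * apply HK. exact Hlt.
    + apply Rle_trans with (1 / 4 * INR (S n)).
      * apply Rmult_le_compat_r. apply pos_INR. apply Rmin_r.
      * assert (Hn : INR N <= INR n) by (apply le_INR; lia).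
        rewrite S_INR.
        assert (T : Cmod (RtoC (INR n)) <= Cmod (c + RtoC (INR n))%C + Cmod c).
        { replace (RtoC (INR n)) with ((c + RtoC (INR n)) + - c)%C at 1 by ring.
          eapply Rle_trans. apply Cmod_triangle. rewrite Cmod_opp. lra. }
        rewrite Cmod_R, Rabs_right in T by (apply Rle_ge, pos_INR).
        pose proof (Cmod_ge_0 c). lra.
Qed.

Definition fs (a b c : C) (n : nat) : C :=
  (poch a n * poch b n / (poch c n * RtoC (INR (fact n))))%C.

Lemma poch_S (x : C) n : poch x (S n) = (poch x n * (x + RtoC (INR n)))%C.
Proof. reflexivity. Qed.

Lemma cn_nz (c : C) : (forall m : nat, c <> (- RtoC (INR m))%C) -> forall n, (c + RtoC (INR n))%C <> 0%C.
Proof. intros hc n E. apply (hc n). replace c with ((c + RtoC (INR n)) - RtoC (INR n))%C by ring. rewrite E. ring. Qed.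

Lemma poch_nz (c : C) : (forall m : nat, c <> (- RtoC (INR m))%C) -> forall n, poch c n <> 0%C.
Proof.
  intros hc n. induction n.
  - simpl. apply C1_nz.
  - rewrite poch_S. apply Cmult_neq_0. exact IHn. apply cn_nz. exact hc.
Qed.

Lemma fs_S (a b c : C) : (forall m : nat, c <> (- RtoC (INR m))%C) -> forall n,
  fs a b c (S n) = (fs a b c n * ((a + RtoC (INR n)) * (b + RtoC (INR n)) / (RtoC (INR (S n)) * (c + RtoC (INR n)))))%C.
Proof.
  intros hc n. unfold fs. rewrite !poch_S, fact_simpl, mult_INR, RtoC_mult.
  field. repeat split.
  - apply cn_nz. exact hc.
  - apply RtoC_neq0. apply not_0_INR. lia.
  - apply RtoC_neq0. apply INR_fact_neq0.
  - apply poch_nz. exact hc.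
Qed.

Open Scope R_scope.

Lemma radius_geom (cc : nat -> C) (M x : R) : 1 <= M -> (forall n, Cmod (cc n) <= M ^ n) ->
  Rabs x < / M ->
  Rbar_lt (Rabs x) (CV_radius (fun n => Re (cc n))) /\
  Rbar_lt (Rabs x) (CV_radius (fun n => Im (cc n))).
Proof.
  intros HM Hb Hx.
  assert (HMp : 0 < M) by lra.
  apply radius_C with (b := fun n => M ^ n) (y := (Rabs x + / M) / 2).
  - lra.
  - exact Hb.
  - assert (Hq : Rabs (M * ((Rabs x + / M) / 2)) < 1).
    { pose proof (Rabs_pos x).
      rewrite Rabs_right.
      + replace (M * ((Rabs x + / M) / 2)) with ((M * Rabs x + M * / M) / 2) by (unfold Rdiv; ring).
        rewrite Rinv_r by lra.
        assert (M * Rabs x < 1).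
        { apply Rmult_lt_reg_l with (/ M). apply Rinv_0_lt_compat; lra.
          rewrite <- Rmult_assoc, Rinv_l, Rmult_1_l, Rmult_1_r by lra. exact Hx. }
        lra.
      + apply Rle_ge. apply Rmult_le_pos. lra.
        pose proof (Rinv_0_lt_compat M HMp). lra. }
    destruct (ex_series_geom _ Hq) as [l Hl]. exists l.
    eapply is_series_ext; [|exact Hl]. intros n. simpl. rewrite Rpow_mult_distr. reflexivity.
Qed.

Lemma fs_0 a b c : fs a b c 0 = 1%C.
Proof. unfold fs. simpl. apply injective_projections; simpl; field. Qed.

Lemma div_le_aux (X X' Y Y' : R) : 0 <= X -> X <= X' -> 0 < Y' -> Y' <= Y -> X / Y <= X' / Y'.
Proof.
  intros H0 H1 H2 H3. apply Rle_trans with (X' / Y).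
  - unfold Rdiv. apply Rmult_le_compat_r. apply Rlt_le, Rinv_0_lt_compat. lra. exact H1.
  - unfold Rdiv. apply Rmult_le_compat_l. lra. apply Rinv_le_contravar; lra.
Qed.

Lemma Cmod_add_nat (a : C) n : Cmod (a + RtoC (INR n))%C <= (Cmod a + 1) * INR (S n).
Proof.
  eapply Rle_trans. apply Cmod_triangle. rewrite Cmod_R, Rabs_right by (apply Rle_ge, pos_INR).
  rewrite S_INR. pose proof (pos_INR n). pose proof (Cmod_ge_0 a). nra.
Qed.

Lemma fs_bound a b c : (forall m : nat, c <> (- RtoC (INR m))%C) ->
  exists K, 1 <= K /\ forall n, Cmod (fs a b c n) <= K ^ n.
Proof.
  intros hc. destruct (delta_exists c hc) as [d [Hd Hdn]].
  set (K0 := (Cmod a + 1) * (Cmod b + 1) / d).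
  exists (Rmax 1 K0). split. apply Rmax_l.
  intros n. induction n.
  - rewrite fs_0, Cmod_1. simpl. lra.
  - rewrite fs_S by exact hc. rewrite Cmod_mult.
    change (Rmax 1 K0 ^ S n) with (Rmax 1 K0 * Rmax 1 K0 ^ n). rewrite (Rmult_comm (Rmax 1 K0)).
    apply Rmult_le_compat. apply Cmod_ge_0. apply Cmod_ge_0. exact IHn.
    apply Rle_trans with K0; [|apply Rmax_r].
    assert (HS : 0 < INR (S n)) by (apply lt_0_INR; lia).
    rewrite Cmod_div by (apply Cmult_neq_0; [apply RtoC_neq0; apply not_0_INR; lia | apply cn_nz; exact hc]).
    rewrite !Cmod_mult, Cmod_R, Rabs_right by lra.
    unfold K0.
    replace ((Cmod a + 1) * (Cmod b + 1) / d)
      with (((Cmod a + 1) * INR (S n)) * ((Cmod b + 1) * INR (S n)) / (INR (S n) * (d * INR (S n))))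
      by (field; lra).
    apply div_le_aux.
    + apply Rmult_le_pos; apply Cmod_ge_0.
    + apply Rmult_le_compat; try apply Cmod_ge_0; apply Cmod_add_nat.
    + apply Rmult_lt_0_compat. lra. apply Rmult_lt_0_compat; lra.
    + apply Rmult_le_compat_l. lra. apply Hdn.
Qed.

Lemma hypF_eq a b c K x : 1 <= K -> (forall n, Cmod (fs a b c n) <= K ^ n) -> Rabs x < / K ->
  hypF a b c (RtoC x) = (PSeries (fun n => Re (fs a b c n)) x, PSeries (fun n => Im (fs a b c n)) x).
Proof.
  intros HK Hb Hx. destruct (radius_geom _ _ _ HK Hb Hx) as [H1 H2].
  unfold hypF. apply CSeries_correct. apply is_series_C.
  - eapply is_series_ext; [|apply (ex_series_of_radius _ _ H1)].
    intros n. cbv beta. change (poch a n * poch b n / (poch c n * RtoC (INR (fact n))))%C with (fs a b c n).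
    rewrite pow_n_RtoC, re_scal_r. reflexivity.
  - eapply is_series_ext; [|apply (ex_series_of_radius _ _ H2)].
    intros n. cbv beta. change (poch a n * poch b n / (poch c n * RtoC (INR (fact n))))%C with (fs a b c n).
    rewrite pow_n_RtoC, im_scal_r. reflexivity.
Qed.

Open Scope R_scope.

Fixpoint cs (F : nat -> C) (n : nat) : C :=
  match n with O => 0%C | S m => (cs F m + F m)%C end.
Definition conv (g f : nat -> C) (n : nat) : C := cs (fun k => g k * f (n - k)%nat)%C (S n).

Lemma Re_cs F n : Re (cs F (S n)) = sum_f_R0 (fun k => Re (F k)) n.
Proof.
  induction n. change (cs F 1) with (0 + F 0%nat)%C. simpl sum_f_R0. destruct (F 0%nat). simpl. ring.
  change (cs F (S (S n))) with (cs F (S n) + F (S n))%C.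
  simpl sum_f_R0. rewrite <- IHn. reflexivity.
Qed.
Lemma Im_cs F n : Im (cs F (S n)) = sum_f_R0 (fun k => Im (F k)) n.
Proof.
  induction n. change (cs F 1) with (0 + F 0%nat)%C. simpl sum_f_R0. destruct (F 0%nat). simpl. ring.
  change (cs F (S (S n))) with (cs F (S n) + F (S n))%C.
  simpl sum_f_R0. rewrite <- IHn. reflexivity.
Qed.

Lemma Re_conv g f n : Re (conv g f n) =
  PS_mult (fun k => Re (g k)) (fun k => Re (f k)) n - PS_mult (fun k => Im (g k)) (fun k => Im (f k)) n.
Proof.
  unfold conv, PS_mult. rewrite Re_cs, <- minus_sum. apply sum_eq. intros i _.
  destruct (g i), (f (n - i)%nat). simpl. ring.
Qed.
Lemma Im_conv g f n : Im (conv g f n) =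
  PS_mult (fun k => Re (g k)) (fun k => Im (f k)) n + PS_mult (fun k => Im (g k)) (fun k => Re (f k)) n.
Proof.
  unfold conv, PS_mult. rewrite Im_cs, <- plus_sum. apply sum_eq. intros i _.
  destruct (g i), (f (n - i)%nat). simpl. ring.
Qed.

Lemma ps_mult_series A B x : Rbar_lt (Rabs x) (CV_radius A) -> Rbar_lt (Rabs x) (CV_radius B) ->
  is_series (fun n => PS_mult A B n * x ^ n) (PSeries A x * PSeries B x).
Proof.
  intros HA HB. apply is_pseries_R. apply is_pseries_mult; try assumption.
  - apply PSeries_correct. apply CV_radius_inside. exact HA.
  - apply PSeries_correct. apply CV_radius_inside. exact HB.
Qed.

Lemma conv_series (g f : nat -> C) x :
  Rbar_lt (Rabs x) (CV_radius (fun n => Re (g n))) -> Rbar_lt (Rabs x) (CV_radius (fun n => Im (g n))) ->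
  Rbar_lt (Rabs x) (CV_radius (fun n => Re (f n))) -> Rbar_lt (Rabs x) (CV_radius (fun n => Im (f n))) ->
  is_series (fun n => conv g f n * pow_n (RtoC x) n)%C
    ((PSeries (fun n => Re (g n)) x, PSeries (fun n => Im (g n)) x) *
     (PSeries (fun n => Re (f n)) x, PSeries (fun n => Im (f n)) x))%C.
Proof.
  intros H1 H2 H3 H4. apply is_series_C.
  - pose proof (is_series_minus _ _ _ _ (ps_mult_series _ _ _ H1 H3) (ps_mult_series _ _ _ H2 H4)) as S.
    eapply is_series_ext; [|exact S]. intros n. cbv beta.
    rewrite pow_n_RtoC, re_scal_r, Re_conv. change (plus ?u (opp ?v)) with (u + - v). lazymatch goal with |- ?a = ?b => change (@eq R a b) end. ring.
  - pose proof (is_series_plus _ _ _ _ (ps_mult_series _ _ _ H1 H4) (ps_mult_series _ _ _ H2 H3)) as S.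
    eapply is_series_ext; [|exact S]. intros n. cbv beta.
    rewrite pow_n_RtoC, im_scal_r, Im_conv. change (plus ?u ?v) with (u + v). lazymatch goal with |- ?a = ?b => change (@eq R a b) end. ring.
Qed.

Lemma ps_unique (d : nat -> R) r : 0 < r ->
  (forall x, Rabs x < r -> is_series (fun n => d n * x ^ n) 0) -> forall n, d n = 0.
Proof.
  intros Hr H n.
  assert (Hrad : Rbar_lt (Rabs 0) (CV_radius d)).
  { apply radius_lt with (r / 2). rewrite Rabs_R0, Rabs_right; lra.
    eexists. apply H. rewrite Rabs_right; lra. }
  pose proof (is_derive_n_PSeries n d 0 Hrad) as D.
  apply is_derive_n_unique in D.
  rewrite PSeries_0 in D. unfold PS_derive_n in D.
  assert (L : locally 0 (fun t => PSeries d t = 0)).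
  { exists (mkposreal r Hr). intros t Ht. unfold PSeries. apply is_series_unique. apply H.
    change (Rabs (t - 0) < r) in Ht. rewrite Rminus_0_r in Ht. exact Ht. }
  rewrite (Derive_n_ext_loc _ (fun _ => 0) n 0 L) in D.
  assert (Z : Derive_n (fun _ : R_UniformSpace => 0) n 0 = 0) by (destruct n; [reflexivity| apply Derive_n_const]).
  rewrite Z in D. simpl in D.
  assert (Hf : INR (fact n) <> 0) by apply INR_fact_neq0.
  unfold Rdiv in D. rewrite Rinv_1, Rmult_1_r in D.
  symmetry in D. apply Rmult_integral in D. destruct D as [D|D]; [contradiction|exact D].
Qed.

Open Scope R_scope.

Lemma u_eq (a b c p : C) (u : nat -> C)
  (hc : forall m : nat, c <> (- RtoC (INR m))%C)
  (hu : forall z : C, Cmod z < 1 ->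
        is_series (fun n => u n * pow_n z n)%C (Cexp (- p * Carctan z) * hypF a b c z)%C) :
  forall n, u n = conv (gs p) (fs a b c) n.
Proof.
  destruct (fs_bound a b c hc) as [K [HK Hb]].
  set (r := Rmin (/ (Cmod p + 1)) (/ K)).
  assert (HM : 1 <= Cmod p + 1) by (pose proof (Cmod_ge_0 p); lra).
  assert (Hr : 0 < r) by (apply Rmin_pos; apply Rinv_0_lt_compat; lra).
  assert (Hr1 : r <= 1).
  { apply Rle_trans with (/ K). apply Rmin_r. rewrite <- Rinv_1. apply Rinv_le_contravar; lra. }
  assert (Main : forall x, Rabs x < r ->
    is_series (fun n => (u n - conv (gs p) (fs a b c) n) * pow_n (RtoC x) n)%C (RtoC 0)).
  { intros x Hx.
    assert (Hx1 : Rabs x < / (Cmod p + 1)) by (pose proof (Rmin_l (/ (Cmod p + 1)) (/ K)); fold r in H; lra).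
    assert (Hx2 : Rabs x < / K) by (pose proof (Rmin_r (/ (Cmod p + 1)) (/ K)); fold r in H; lra).
    destruct (gs_radius p x Hx1) as [H1 H2].
    destruct (radius_geom _ _ _ HK Hb Hx2) as [H3 H4].
    pose proof (conv_series (gs p) (fs a b c) x H1 H2 H3 H4) as S1.
    rewrite G_eq in S1 by exact Hx1.
    rewrite <- (hypF_eq a b c K x HK Hb Hx2) in S1.
    assert (Hz : Cmod (RtoC x) < 1) by (rewrite Cmod_R; lra).
    pose proof (is_series_minus _ _ _ _ (hu _ Hz) S1) as S.
    match type of S with is_series _ ?l => replace l with (RtoC 0) in S by (destruct (Cexp (- p * Carctan (RtoC x)) * hypF a b c (RtoC x))%C; apply injective_projections; simpl; ring) end.
    eapply is_series_ext; [|exact S]. intros n. cbv beta.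
    change (plus ?u (opp ?v)) with (u + - v)%C. lazymatch goal with |- ?a = ?b => change (@eq C a b) end. ring. }
  assert (ReZ : forall n, Re (u n - conv (gs p) (fs a b c) n)%C = 0).
  { apply (ps_unique _ r Hr). intros x Hx.
    pose proof (is_series_Re _ _ (Main x Hx)) as S.
    eapply is_series_ext; [|exact S]. intros n. cbv beta.
    rewrite pow_n_RtoC, re_scal_r. reflexivity. }
  assert (ImZ : forall n, Im (u n - conv (gs p) (fs a b c) n)%C = 0).
  { apply (ps_unique _ r Hr). intros x Hx.
    pose proof (is_series_Im _ _ (Main x Hx)) as S.
    eapply is_series_ext; [|exact S]. intros n. cbv beta.
    rewrite pow_n_RtoC, im_scal_r. reflexivity. }
  intros n. specialize (ReZ n). specialize (ImZ n).
  destruct (u n) as [ur ui], (conv (gs p) (fs a b c) n) as [wr wi].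
  simpl in ReZ, ImZ. apply injective_projections; simpl; lra.
Qed.

Open Scope C_scope.

Definition sadd (s t : nat -> C) : nat -> C := fun n => s n + t n.
Definition sscal (k : C) (s : nat -> C) : nat -> C := fun n => k * s n.
Definition sX (s : nat -> C) : nat -> C := fun n => match n with O => 0 | S m => s m end.
Definition sTh (s : nat -> C) : nat -> C := fun n => RtoC (INR n) * s n.
Definition sQ (s : nat -> C) : nat -> C := sadd s (sX (sX s)).
Definition sT (p : C) (y : nat -> C) : nat -> C := sadd (sQ (sTh y)) (sscal p (sX y)).

Ltac normINR := repeat rewrite ?S_INR, ?INR_0, ?RtoC_plus.

Lemma sX_add A B : sX (sadd A B) = sadd (sX A) (sX B).
Proof. apply functional_extensionality. intros [|n]; unfold sX, sadd; simpl; ring. Qed.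
Lemma sX_scal k A : sX (sscal k A) = sscal k (sX A).
Proof. apply functional_extensionality. intros [|n]; unfold sX, sscal; simpl; ring. Qed.
Lemma sTh_add A B : sTh (sadd A B) = sadd (sTh A) (sTh B).
Proof. apply functional_extensionality. intros n; unfold sTh, sadd; ring. Qed.
Lemma sTh_scal k A : sTh (sscal k A) = sscal k (sTh A).
Proof. apply functional_extensionality. intros n; unfold sTh, sscal; ring. Qed.
Lemma sTh_X y : sTh (sX y) = sadd (sX (sTh y)) (sX y).
Proof.
  apply functional_extensionality. intros [|n]; unfold sTh, sX, sadd.
  - rewrite INR_0. ring.
  - normINR. ring.
Qed.
Lemma sQ_add A B : sQ (sadd A B) = sadd (sQ A) (sQ B).
Proof. unfold sQ. rewrite !sX_add. apply functional_extensionality. intros n. unfold sadd. ring. Qed.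
Lemma sQ_scal k A : sQ (sscal k A) = sscal k (sQ A).
Proof. unfold sQ. rewrite !sX_scal. apply functional_extensionality. intros n. unfold sadd, sscal. ring. Qed.
Lemma sQ_X A : sQ (sX A) = sX (sQ A).
Proof. unfold sQ. rewrite sX_add. reflexivity. Qed.

Lemma sQ_T p y : sQ (sT p y) = sadd (sT p (sQ y)) (sscal (-2) (sX (sX (sQ y)))).
Proof.
  apply functional_extensionality. intros n.
  destruct n as [|[|[|[|m]]]]; cbv beta iota delta [sQ sT sadd sscal sX sTh]; normINR; ring.
Qed.


Open Scope C_scope.

Lemma cs_ext F G n : (forall k, (k < n)%nat -> F k = G k) -> cs F n = cs G n.
Proof.
  induction n; intros H. reflexivity.
  simpl. rewrite IHn by (intros; apply H; lia). rewrite H by lia. reflexivity.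
Qed.
Lemma cs_add F G n : cs (fun k => F k + G k) n = cs F n + cs G n.
Proof. induction n; simpl. ring. rewrite IHn. ring. Qed.
Lemma cs_scal k F n : cs (fun j => k * F j) n = k * cs F n.
Proof. induction n; simpl. ring. rewrite IHn. ring. Qed.
Lemma cs_shift F n : cs F (S n) = F 0%nat + cs (fun k => F (S k)) n.
Proof.
  induction n. simpl. ring.
  change (cs F (S (S n))) with (cs F (S n) + F (S n)). rewrite IHn. simpl. ring.
Qed.

Lemma conv_X_l g f : conv (sX g) f = sX (conv g f).
Proof.
  apply functional_extensionality. intros [|m]; unfold conv.
  - simpl. ring.
  - rewrite cs_shift. simpl (sX g 0). rewrite Cmult_0_l, Cplus_0_l. reflexivity.
Qed.
Lemma conv_X_r g f : conv g (sX f) = sX (conv g f).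
Proof.
  apply functional_extensionality. intros [|m].
  - unfold conv. simpl. ring.
  - change (sX (conv g f) (S m)) with (conv g f m). unfold conv.
    change (cs (fun k => g k * sX f (S m - k)%nat) (S (S m)))
      with (cs (fun k => g k * sX f (S m - k)%nat) (S m) + g (S m) * sX f (S m - S m)%nat).
    rewrite Nat.sub_diag. simpl (sX f 0). rewrite Cmult_0_r, Cplus_0_r.
    apply cs_ext. intros k Hk. replace (S m - k)%nat with (S (m - k)) by lia. reflexivity.
Qed.
Lemma conv_add_l g1 g2 f : conv (sadd g1 g2) f = sadd (conv g1 f) (conv g2 f).
Proof.
  apply functional_extensionality. intros n. unfold conv, sadd. rewrite <- cs_add.
  apply cs_ext. intros k _. ring.
Qed.
Lemma conv_add_r g f1 f2 : conv g (sadd f1 f2) = sadd (conv g f1) (conv g f2).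
Proof.
  apply functional_extensionality. intros n. unfold conv, sadd. rewrite <- cs_add.
  apply cs_ext. intros k _. ring.
Qed.
Lemma conv_scal_l k g f : conv (sscal k g) f = sscal k (conv g f).
Proof.
  apply functional_extensionality. intros n. unfold conv, sscal. rewrite <- cs_scal.
  apply cs_ext. intros j _. ring.
Qed.
Lemma conv_scal_r k g f : conv g (sscal k f) = sscal k (conv g f).
Proof.
  apply functional_extensionality. intros n. unfold conv, sscal. rewrite <- cs_scal.
  apply cs_ext. intros j _. ring.
Qed.
Lemma conv_Th g f : sTh (conv g f) = sadd (conv (sTh g) f) (conv g (sTh f)).
Proof.
  apply functional_extensionality. intros n. unfold conv, sadd, sTh.
  rewrite <- cs_add, <- cs_scal. apply cs_ext. intros k Hk.
  assert (E : INR n = (INR k + INR (n - k))%R) by (rewrite <- plus_INR; f_equal; lia).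
  rewrite E, RtoC_plus. ring.
Qed.
Lemma conv_Q_l A h : conv (sQ A) h = sQ (conv A h).
Proof. unfold sQ. rewrite conv_add_l, !conv_X_l. reflexivity. Qed.
Lemma conv_Q_r g A : conv g (sQ A) = sQ (conv g A).
Proof. unfold sQ. rewrite conv_add_r, !conv_X_r. reflexivity. Qed.

Lemma Tconv p g h : sQ (sTh g) = sscal (- p) (sX g) -> sT p (conv g h) = sQ (conv g (sTh h)).
Proof.
  intros Hg. unfold sT. rewrite conv_Th, sQ_add, <- conv_Q_l, Hg, conv_scal_l, conv_X_l.
  apply functional_extensionality. intros n. unfold sadd, sscal. ring.
Qed.

Lemma main_seq (g f : nat -> C) (p a b c : C) :
  sQ (sTh g) = sscal (- p) (sX g) ->
  sadd (sTh (sTh f)) (sscal (c - 1) (sTh f)) =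
    sX (sadd (sadd (sTh (sTh f)) (sscal (a + b) (sTh f))) (sscal (a * b) f)) ->
  let W := conv g f in
  let Y1 := sadd (sT p W) (sscal (c - 1) (sQ W)) in
  let Y2 := sadd (sT p W) (sscal b (sQ W)) in
  sadd (sT p Y1) (sscal (-2) (sX (sX Y1))) =
    sX (sadd (sadd (sT p Y2) (sscal (-2) (sX (sX Y2)))) (sscal a (sQ Y2))).
Proof.
  intros Hg Hf W Y1 Y2.
  set (h1 := sadd (sTh f) (sscal (c - 1) f)).
  set (h2 := sadd (sTh f) (sscal b f)).
  set (k := sadd (sTh h2) (sscal a h2)).
  assert (Hk : sTh h1 = sX k).
  { unfold h1, k, h2. rewrite !sTh_add, !sTh_scal, Hf.
    f_equal. apply functional_extensionality. intros n. unfold sadd, sscal. ring. }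
  assert (E1 : sQ (conv g h1) = Y1).
  { unfold h1, Y1, W. rewrite conv_add_r, conv_scal_r, sQ_add, sQ_scal, <- (Tconv p g f Hg). reflexivity. }
  assert (E2 : sQ (conv g h2) = Y2).
  { unfold h2, Y2, W. rewrite conv_add_r, conv_scal_r, sQ_add, sQ_scal, <- (Tconv p g f Hg). reflexivity. }
  assert (L1 : sQ (sQ (conv g (sTh h1))) = sadd (sT p Y1) (sscal (-2) (sX (sX Y1)))).
  { rewrite <- (Tconv p g h1 Hg), sQ_T, E1. reflexivity. }
  assert (L2 : sQ (sQ (conv g (sTh h2))) = sadd (sT p Y2) (sscal (-2) (sX (sX Y2)))).
  { rewrite <- (Tconv p g h2 Hg), sQ_T, E2. reflexivity. }
  rewrite <- L1, Hk, conv_X_r, !sQ_X. f_equal.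
  unfold k. rewrite conv_add_r, conv_scal_r, !sQ_add, !sQ_scal, L2, E2. reflexivity.
Qed.

Open Scope C_scope.

Lemma g_hyp p : sQ (sTh (gs p)) = sscal (- p) (sX (gs p)).
Proof.
  apply functional_extensionality. intros [|k].
  - cbv beta iota delta [sQ sadd sscal sX sTh]. rewrite INR_0. ring.
  - pose proof (gs_ode p k) as E.
    cbv beta iota delta [sQ sadd sscal sX sTh].
    destruct k as [|[|m]].
    + rewrite <- E. ring.
    + rewrite INR_0. rewrite <- E. ring.
    + rewrite <- E. ring.
Qed.

Lemma f_hyp a b c : (forall m : nat, c <> - RtoC (INR m)) ->
  sadd (sTh (sTh (fs a b c))) (sscal (c - 1) (sTh (fs a b c))) =
    sX (sadd (sadd (sTh (sTh (fs a b c))) (sscal (a + b) (sTh (fs a b c)))) (sscal (a * b) (fs a b c))).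
Proof.
  intros hc. apply functional_extensionality. intros [|k].
  - cbv beta iota delta [sadd sscal sX sTh]. rewrite INR_0. ring.
  - cbv beta iota delta [sadd sscal sX sTh].
    rewrite (fs_S a b c hc k).
    assert (H1 : RtoC (INR (S k)) <> 0) by (apply RtoC_neq0, not_0_INR; lia).
    pose proof (cn_nz c hc k) as H2.
    normINR. rewrite S_INR, RtoC_plus in H1.
    field. split; assumption.
Qed.

Lemma solve_lin (D x y : C) : D <> 0 -> D * x - D * y = 0 -> x = y.
Proof.
  intros HD H. assert (E : D * (x - y) = 0) by (rewrite <- H; ring).
  assert (E2 : x - y = 0).
  { replace (x - y) with (/ D * (D * (x - y))) by (field; exact HD). rewrite E. ring. }
  replace x with ((x - y) + y) by ring. rewrite E2. ring.
Qed.

Lemma recW (a b c p : C) (hc : forall m : nat, c <> - RtoC (INR m)) (W : nat -> C) :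
  W = conv (gs p) (fs a b c) ->
  forall n : nat, (4 <= n)%nat ->
     let N := RtoC (INR n) in
     let D := (N + 1) * (c + N) in
     W (S n) =
       ((a + N) * (b + N) - p * (c + 2 * N)) / D * W n
     + (p * (a + b + 2 * N - 1) - 2 * (N - 1) * (c + N - 2) - p ^ 2) / D * W (n - 1)%nat
     + (2 * (a + N - 2) * (b + N - 2) - p * (c + 2 * N - 6) + p ^ 2) / D * W (n - 2)%nat
     + (p * (a + b + 2 * N - 7) - (N - 3) * (c + N - 4)) / D * W (n - 3)%nat
     + (a + N - 4) * (b + N - 4) / D * W (n - 4)%nat.
Proof.
  intros HW n Hn N D.
  pose proof (main_seq (gs p) (fs a b c) p a b c (g_hyp p) (f_hyp a b c hc)) as H.
  cbv zeta in H. rewrite <- HW in H.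
  apply (f_equal (fun F => F (S n))) in H.
  assert (HN1 : RtoC (INR (S n)) <> 0) by (apply RtoC_neq0, not_0_INR; lia).
  pose proof (cn_nz c hc n) as Hcn.
  assert (HD : D <> 0).
  { unfold D, N. apply Cmult_neq_0; [|exact Hcn]. rewrite S_INR, RtoC_plus in HN1. exact HN1. }
  destruct n as [|[|[|[|m]]]]; try lia.
  cbv beta iota delta [sadd sscal sX sTh sQ sT] in H.
  replace (S (S (S (S m))) - 1)%nat with (S (S (S m))) by lia.
  replace (S (S (S (S m))) - 2)%nat with (S (S m)) by lia.
  replace (S (S (S (S m))) - 3)%nat with (S m) by lia.
  replace (S (S (S (S m))) - 4)%nat with m by lia.
  apply (solve_lin D); [exact HD|].
  unfold D, N in *. clear HW.
  rewrite S_INR, RtoC_plus in HN1.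
  repeat rewrite S_INR in H. repeat rewrite RtoC_plus in H.
  repeat rewrite S_INR in Hcn. repeat rewrite RtoC_plus in Hcn.
  repeat rewrite S_INR in HN1. repeat rewrite RtoC_plus in HN1.
  clear HD. normINR.
  match type of H with ?L = ?R => transitivity (L - R) end.
  - field. split; assumption.
  - rewrite H. ring.
Qed.

Open Scope C_scope.

Ltac nzfin X E c := simpl INR; repeat rewrite RtoC_plus;
    transitivity (c - X); [rewrite E; ring | ring].
Ltac nzc hc c :=
  match goal with
  | |- ?X <> _ =>
    let E := fresh in intro E;
    first [ apply (hc 0%nat); nzfin X E c | apply (hc 1%nat); nzfin X E c
          | apply (hc 2%nat); nzfin X E c | apply (hc 3%nat); nzfin X E c ]
  end.

Lemma initW (a b c p : C) (hc : forall m : nat, c <> - RtoC (INR m)) :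
  let W := conv (gs p) (fs a b c) in
  W 0%nat = 1 /\
  W 1%nat = a * b / c - p /\
  W 2%nat = - (a * b * p / c) + a * (a + 1) * b * (b + 1) / (2 * c * (c + 1)) + p ^ 2 / 2 /\
  W 3%nat = a * b * p ^ 2 / (2 * c) - a * (a + 1) * b * (b + 1) * p / (2 * c * (c + 1))
            + a * (a + 1) * (a + 2) * b * (b + 1) * (b + 2) / (6 * c * (c + 1) * (c + 2))
            + (1 / 3) * (p - p ^ 3 / 2) /\
  W 4%nat = (1 / 24) * (6 * a * (a + 1) * b * (b + 1) * p ^ 2 / (c * (c + 1))
                        - 4 * a * b * (p ^ 2 - 2) * p / c
                        - 4 * poch a 3 * poch b 3 * p / poch c 3
                        + poch a 4 * poch b 4 / poch c 4
                        + p ^ 4 - 8 * p ^ 2).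
Proof.
  intros W. unfold W, conv, fs, gs. simpl. repeat rewrite RtoC_plus.
  split; [|split; [|split; [|split]]].
  - field.
  - field. repeat split; cbv beta; nzc hc c.
  - field. repeat split; cbv beta; nzc hc c.
  - field. repeat split; cbv beta; first [nzc hc c | intro E; apply (f_equal Re) in E; simpl in E; lra].
  - field. repeat split; cbv beta; first [nzc hc c | intro E; apply (f_equal Re) in E; simpl in E; lra].
Qed.

Open Scope C_scope.

Theorem theorem3p7 (a b c p : C) (u : nat -> C)
  (hc : forall m : nat, c <> - RtoC (INR m))
  (hu : forall z : C, Cmod z < 1 ->
        is_series (fun n => u n * pow_n z n) (Cexp (- p * Carctan z) * hypF a b c z)) :
  u 0%nat = 1 /\
  u 1%nat = a * b / c - p /\
  u 2%nat = - (a * b * p / c) + a * (a + 1) * b * (b + 1) / (2 * c * (c + 1)) + p ^ 2 / 2 /\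
  u 3%nat = a * b * p ^ 2 / (2 * c) - a * (a + 1) * b * (b + 1) * p / (2 * c * (c + 1))
            + a * (a + 1) * (a + 2) * b * (b + 1) * (b + 2) / (6 * c * (c + 1) * (c + 2))
            + (1 / 3) * (p - p ^ 3 / 2) /\
  u 4%nat = (1 / 24) * (6 * a * (a + 1) * b * (b + 1) * p ^ 2 / (c * (c + 1))
                        - 4 * a * b * (p ^ 2 - 2) * p / c
                        - 4 * poch a 3 * poch b 3 * p / poch c 3
                        + poch a 4 * poch b 4 / poch c 4
                        + p ^ 4 - 8 * p ^ 2) /\
  (forall n : nat, (4 <= n)%nat ->
     let N := RtoC (INR n) in
     let D := (N + 1) * (c + N) in
     u (S n) =
       ((a + N) * (b + N) - p * (c + 2 * N)) / D * u n
     + (p * (a + b + 2 * N - 1) - 2 * (N - 1) * (c + N - 2) - p ^ 2) / D * u (n - 1)%nat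
     + (2 * (a + N - 2) * (b + N - 2) - p * (c + 2 * N - 6) + p ^ 2) / D * u (n - 2)%nat
     + (p * (a + b + 2 * N - 7) - (N - 3) * (c + N - 4)) / D * u (n - 3)%nat
     + (a + N - 4) * (b + N - 4) / D * u (n - 4)%nat).
Proof.
  assert (HW : u = conv (gs p) (fs a b c)).
  { apply functional_extensionality. apply (u_eq a b c p u hc hu). }
  destruct (initW a b c p hc) as [I0 [I1 [I2 [I3 I4]]]].
  rewrite <- HW in I0, I1, I2, I3, I4.
  split; [exact I0|]. split; [exact I1|]. split; [exact I2|].
  split; [exact I3|]. split; [exact I4|].
  exact (recW a b c p hc u HW).
Qed.
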